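(* Let $(X,\mu)$ be a standard probability space and let $T_1,\dots,T_n$ be measure-preserving Borel bijections of $(X,\mu)$ with pairwise disjoint supports. Suppose there are pairwise relatively prime integers $p_1,\dots,p_n\geq2$ such that for each $k\in\{1,\dots,n\}$, every $T_k$-orbit is finite and its cardinality divides a power of $p_k$. Then for every $k\in\{1,\dots,n\}$, $T_k$ belongs to the closure, for the uniform topology, of the group generated by $T_1T_2\cdots T_n$.
   Context: The support of $T$ is $\{x:T(x)\neq x\}$. The uniform topology on the group of measure-preserving bijections of $(X,\mu)$ (identified up to null sets) is given by the metric $d_u(T,U)=\mu(\{x:T(x)\neq U(x)\})$. *)

(* Defs.v *)
From HB Require Import structures.
From mathcomp Require Import all_boot all_order all_algebra.
From mathcomp Require Import all_classical all_reals all_analysis.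
Set Implicit Arguments. Unset Strict Implicit. Unset Printing Implicit Defensive.
Import Order.TTheory GRing.Theory Num.Theory.
Local Open Scope classical_set_scope.
Local Open Scope ring_scope.

(* A standard Borel space: Borel-isomorphic to a Borel subset of the reals
   (Kuratowski's characterization). *)
Definition standard_borel (R : realType) d (X : measurableType d) : Prop :=
  exists f : X -> R, [/\ injective f, measurable_fun setT f,
    measurable (range f) & forall A : set X, measurable A -> measurable (f @` A)].

Definition mp_borel_bij (R : realType) d (X : measurableType d)
  (mu : set X -> \bar R) (T : X -> X) : Prop :=
  [/\ bijective T, measurable_fun setT T &
      forall A : set X, measurable A -> mu (T @^-1` A) = mu A].

Definition supp {X : Type} (T : X -> X) : set X := [set x | T x <> x].

(* the T-orbit of x (orbit of the Z-action generated by the bijection T):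
   y = T^m x for some integer m, i.e. y = T^m x or x = T^m y with m : nat *)
Definition z_orbit {X : Type} (T : X -> X) (x : X) : set X :=
  [set y | exists m : nat, iter m T x = y \/ iter m T y = x].

(* [set x | T x <> S^m x] for m : int, for a bijection S; for m = -(n+1)
   (Negz n) we use T x <> S^{-(n+1)} x  <->  S^{n+1} (T x) <> x. *)
Definition disagree_pow {X : Type} (S T : X -> X) (m : int) : set X :=
  match m with
  | Posz n => [set x | T x <> iter n S x]
  | Negz n => [set x | iter n.+1 S (T x) <> x]
  end.

(* T lies in the uniform closure of the cyclic group generated by S:
   for every eps > 0 some S^m (m : int) has d_u(T, S^m) < eps. *)
Definition in_uniform_closure_cyclic (R : realType) {X : Type}
  (mu : set X -> \bar R) (S T : X -> X) : Prop :=
  forall eps : R, 0 < eps -> exists m : int, (mu (disagree_pow S T m) < eps%:E)%E.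

(* Main.v *)
Require Import Defs.
From HB Require Import structures.
From mathcomp Require Import all_boot all_order all_algebra.
From mathcomp Require Import all_classical all_reals all_analysis.
Import Order.TTheory GRing.Theory Num.Theory.
Local Open Scope classical_set_scope.

Lemma iter_period {X : Type} (T : X -> X) x P a :
  iter P T x = x -> iter a T x = iter (a %% P) T x.
Proof.
move=> hP; rewrite {1}(divn_eq a P) addnC iterD.
suff -> : forall q, iter (q * P) T x = x by [].
by elim=> [|q IH] //; rewrite mulSn iterD IH hP.
Qed.

Lemma iter_mulP {X : Type} (T : X -> X) x P a :
  iter P T x = x -> (P %| a)%N -> iter a T x = x.
Proof. by move=> hP /eqP Ha; rewrite (iter_period _ _ _ a hP) Ha. Qed.

Lemma iter_inj {X : Type} (T : X -> X) m : injective T -> injective (iter m T).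
Proof.
move=> iT; elim: m => [|m IH] //= a b /iT; exact: IH.
Qed.

From mathcomp Require Import measurable_realfun.

Lemma iter_inj_on {X : Type} (T : X -> X) x M : injective T ->
  (forall k, (0 < k)%N -> (k < M)%N -> iter k T x <> x) ->
  {in `I_M &, injective (fun i => iter i T x)}.
Proof.
move=> iT hk.
suff H : forall i j, (i < j)%N -> (j < M)%N -> iter i T x <> iter j T x.
  move=> i j /set_mem /= hi /set_mem /= hj /= e.
  case: (ltngtP i j) => // hij.
  - by case: (H i j hij hj e).
  - by case: (H j i hij hi (esym e)).
move=> i j hij hjM e.
have hji : j = i + (j - i) by rewrite subnKC // ltnW.
move: e; rewrite hji iterD => /(iter_inj _ i iT) e.
apply: (hk (j - i)); last (by rewrite -e); first by rewrite subn_gt0.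
by apply: leq_ltn_trans hjM; apply: leq_subr.
Qed.

Lemma orbit_period {X : Type} (T : X -> X) x N : injective T ->
  (z_orbit T x #= `I_N)%card -> iter N T x = x.
Proof.
move=> iT hN.
have hex : exists L, (0 < L)%N && `[< iter L T x = x >].
  apply: contrapT => hno.
  have hk : forall k, (0 < k)%N -> (k < N.+1)%N -> iter k T x <> x.
    move=> k k0 _ e; apply: hno; exists k; rewrite k0 /=; exact/asboolP.
  have hinj := iter_inj_on _ _ _ iT hk.
  have h1 := inj_card_eq hinj.
  have h2 : ((fun i => iter i T x) @` `I_N.+1 #<= z_orbit T x)%card.
    apply: subset_card_le => _ [i _ <-]; exists i; by left.
  have h3 : (`I_N.+1 #<= `I_N)%card.
    apply: card_le_trans (card_le_trans h2 _).
      by move: h1; rewrite card_eq_le => /andP[].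
    by move: hN; rewrite card_eq_le => /andP[].
  by move: h3; rewrite card_le_II ltnn.
pose L := ex_minn hex.
have [L0 hL] : (0 < L)%N /\ iter L T x = x.
  rewrite /L; case: ex_minnP => m /andP[m0 /asboolP hm] _; by split.
have hmin : forall k, (0 < k)%N -> (k < L)%N -> iter k T x <> x.
  move=> k k0 kL e.
  have : (L <= k)%N.
    rewrite /L; case: ex_minnP => m _ hm; apply: hm.
    by rewrite k0; apply/asboolP.
  by rewrite leqNgt kL.
have hinj := iter_inj_on _ _ _ iT hmin.
have hO : z_orbit T x = (fun i => iter i T x) @` `I_L.
  apply/seteqP; split; last first.
    by move=> _ [i _ <-]; exists i; left.
  move=> y [m [<-|hy]].
    by exists (m %% L); [rewrite /= ltn_mod|rewrite -iter_period].
  set q := (m %/ L).+1.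
  have hmq : (m <= q * L)%N.
    by rewrite /q mulSn addnC {1}(divn_eq m L) leq_add2l ltnW // ltn_mod.
  have hyq : iter (q * L) T y = y.
    apply: (iter_inj _ m iT).
    by rewrite -iterD addnC iterD hy (iter_mulP _ _ _ _ hL) // dvdn_mull.
  exists ((q * L - m) %% L); first by rewrite /= ltn_mod.
  rewrite -iter_period //.
  by rewrite -hy -iterD subnK.
have : (`I_L #= `I_N)%card.
  apply: card_eq_trans hN.
  by rewrite hO card_eq_sym; apply: inj_card_eq.
by move/card_eq_II => <-.
Qed.

Local Open Scope ring_scope.

Lemma meas_neq (R : realType) d (X : measurableType d) (f : X -> R) (g h : X -> X) :
  injective f -> measurable_fun setT f -> measurable_fun setT g ->
  measurable_fun setT h -> measurable [set x | g x <> h x].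
Proof.
move=> fi fm gm hm.
have := @measurable_neqe _ _ R setT measurableT (EFin \o f \o g) (EFin \o f \o h).
rewrite setTI; move=> H.
have -> : [set x | g x <> h x] = [set x | (EFin \o f \o g) x != (EFin \o f \o h) x].
  apply/seteqP; split=> x /=.
    by move=> ne; apply/negP => /eqP [] /fi.
  by move=> /negP ne e; apply: ne; rewrite e.
apply: H.
  by apply/(@measurable_EFinP _ _ _ _ (f \o g)); apply: measurableT_comp.
by apply/(@measurable_EFinP _ _ _ _ (f \o h)); apply: measurableT_comp.
Qed.

Lemma big_comp_fix {X : Type} (I : eqType) (T : I -> X -> X) (r : seq I) j x :
  uniq r -> (forall i, i != j -> T i x = x) -> (forall i, i != j -> T i (T j x) = T j x) ->
  (\big[(fun f g => f \o g)/idfun]_(i <- r) T i) x = if j \in r then T j x else x.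
Proof.
move=> + h1 h2; elim: r => [|a r IH] /=; first by rewrite big_nil.
move=> /andP[ar ur]; rewrite big_cons /= IH // in_cons.
have [eaj|aj] := eqVneq a j.
  by rewrite -eaj (negbTE ar).
rewrite /=.
by case: ifP => _; [apply: h2|apply: h1].
Qed.

Lemma near_ex (P : nat -> Prop) : (\forall t \near \oo, P t) -> exists E, P E.
Proof. move=> [N _ hN]; exists N; apply: hN => /=; done. Qed.

Theorem corollary6p2 (R : realType) (d : measure_display) (X : measurableType d)
  (mu : probability X R) (n : nat) (T : 'I_n -> X -> X) (p : 'I_n -> nat) :
  standard_borel R X ->
  (forall k, mp_borel_bij mu (T k)) ->
  (forall i j, i != j -> supp (T i) `&` supp (T j) = set0) ->
  (forall k, (2 <= p k)%N) ->
  (forall i j, i != j -> coprime (p i) (p j)) ->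
  (forall k (x : X), exists N : nat,
      (z_orbit (T k) x #= `I_N)%card /\ exists e : nat, (N %| p k ^ e)%N) ->
  forall k, in_uniform_closure_cyclic mu
              (\big[(fun f g => f \o g)/idfun]_(i < n) T i) (T k).
Proof.
move=> [f [finj fmeas _ _]] hbij hdisj hp2 hcop horb k eps eps0.
set S := \big[(fun f g => f \o g)/idfun]_(i < n) T i.
have Tm : forall i, measurable_fun setT (T i) by move=> i; case: (hbij i).
have Ti : forall i, injective (T i) by move=> i; case: (hbij i) => /bij_inj.
have Sm : measurable_fun setT S.
  rewrite /S; apply: (big_ind (fun g : X -> X => measurable_fun setT g)).
  - exact: measurable_id.
  - by move=> g h gm hm; apply: measurableT_comp.
  - by move=> i _; apply: Tm.
have Sim : forall m, measurable_fun setT (fun x => iter m S x).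
  elim=> [|m IH] /=; first exact: measurable_id.
  exact: (measurableT_comp Sm IH).
pose Pj j y := forall i, i != j -> T i y = y.
have Pinv : forall j y, Pj j y -> Pj j (T j y).
  move=> j y hy i ij.
  have [e|ne] := pselect (T j y = y); first by rewrite e; apply: hy.
  apply: contrapT => hne.
  have hjj : T j (T j y) <> T j y by move=> /Ti.
  have : (supp (T i) `&` supp (T j)) (T j y) by split.
  by rewrite hdisj.
have Pex : forall x, exists j, Pj j x.
  move=> x; have [[j hj]|hn] := pselect (exists j, T j x <> x).
    exists j => i ij; apply: contrapT => hne.
    have : (supp (T i) `&` supp (T j)) x by split.
    by rewrite hdisj.
  exists k => i _; apply: contrapT => hne; apply: hn; by exists i.
have SP : forall j y, Pj j y -> S y = T j y.
  move=> j y hy; rewrite /S (@big_comp_fix _ _ T (index_enum 'I_n) j y).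
  - by rewrite mem_index_enum.
  - exact: index_enum_uniq.
  - exact: hy.
  - exact: Pinv.
have SiP : forall j y m, Pj j y -> iter m S y = iter m (T j) y.
  move=> j y m hy.
  suff : Pj j (iter m (T j) y) /\ iter m S y = iter m (T j) y by case.
  elim: m => [|m [IH1 IH2]] //=.
  by split; [apply: Pinv|rewrite IH2 (SP j)].
pose B E := [set x | exists j, iter (p j ^ E) (T j) x <> x].
have Bm : forall E, measurable (B E).
  move=> E.
  have -> : B E = \bigcup_(j in [set: 'I_n]) [set x | iter (p j ^ E) (T j) x <> x].
    by apply/seteqP; split=> x [j] /=; [exists j|move=> _; exists j].
  apply: fin_bigcup_measurable; first exact: finite_finset.
  move=> j _; apply: (@meas_neq R d X f (fun x => iter (p j ^ E)%N (T j) x) idfun finj fmeas); last exact: measurable_id.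
  elim: (p j ^ E)%N => [|m IH] /=; first exact: measurable_id.
  exact: (measurableT_comp (Tm j) IH).
have Bdec : nonincreasing_seq B.
  apply/nonincreasing_seqP => E; rewrite subsetEset => x [j hj]; exists j => hE; apply: hj.
  apply: (iter_mulP _ _ _ _ hE).
  by rewrite expnS dvdn_mull.
have Bcap : \bigcap_E B E = set0.
  apply/seteqP; split=> // x hx.
  have : forall j, exists e, iter (p j ^ e) (T j) x = x.
    move=> j; have [N [hN [e he]]] := horb j x.
    exists e; apply: (iter_mulP _ _ _ _ (orbit_period _ _ _ (Ti j) hN)) => //.
  move=> /choice [ef hef].
  have [j hj] := hx (\max_(j < n) ef j)%N I.
  apply: hj; apply: (iter_mulP _ _ _ _ (hef j)).
  apply: dvdn_exp2l.
  by apply: (@leq_bigmax_cond _ (fun=> true) ef j).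
have hc : (mu \o B) @ \oo --> 0%E.
  rewrite -(@measure0 _ _ _ mu) -Bcap.
  apply: nonincreasing_cvg_mu => //.
    apply: (le_lt_trans (probability_le1 _ (Bm 0%N))); exact: ltry.
  by rewrite Bcap.
move/fine_cvgP: hc => [hfin hc0].
have hlt : \forall t \near \oo, (fine \o (mu \o B)) t < eps.
  by apply: (cvgr_lt _ hc0).

have [E [hE1 hE2]] := near_ex _ (filterI hfin hlt).
have hBE : (mu (B E) < eps%:E)%E.
  by rewrite -[mu (B E)](fineK hE1) lte_fin.
pose P := (p k ^ E)%N.
pose Q := (\prod_(i < n | i != k) p i ^ E)%N.
have cPQ : coprime P Q.
  rewrite /Q; apply: (big_ind (fun q => coprime P q)).
  - exact: coprimen1.
  - by move=> a b ha hb; rewrite coprimeMr ha hb.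
  - move=> i ik; rewrite /P; apply: coprimeXl; apply: coprimeXr.
    by apply: hcop; rewrite eq_sym.
pose m := chinese P Q 1 0.
exists (Posz m).
apply: (le_lt_trans _ hBE).
apply: le_measure; rewrite ?inE.
- exact: (@meas_neq R d X f (T k) (fun x => iter m S x) finj fmeas (Tm k) (Sim m)).
- exact: Bm.
move=> x /= hx; apply: contrapT => hnB.
have hall : forall j, iter (p j ^ E) (T j) x = x.
  by move=> j; apply: contrapT => h; apply: hnB; exists j.
have [j hj] := Pex x.
rewrite (SiP j x m hj) in hx.
have [ejk|njk] := eqVneq j k.
  rewrite ejk in hx; apply: hx.
  rewrite (iter_period _ _ _ m (hall k)) /m (chinese_modl cPQ).
  by rewrite -(iter_period _ _ _ 1 (hall k)).
apply: hx; rewrite (hj k); last by rewrite eq_sym.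
symmetry; apply: (iter_mulP _ _ _ _ (hall j)).
apply: (@dvdn_trans Q).
  by rewrite /Q (bigD1 j) //=; apply: dvdn_mulr.
by rewrite /dvdn /m (chinese_modr cPQ) mod0n.
Qed.
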